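(* Let $I\unlhd K[x_1,\dots,x_n]$ be an ideal and let $w\in\mathbb R^n$. Then $$\overline{\operatorname{in}_{(-1,w)}(\pi^{-1}I)}\big|_{t=1}=\operatorname{in}_{\nu,w}(I),$$ where $\pi^{-1}I$ is the preimage of $I$ under the composite $R[[t]][x]\to\mathcal O_K[x]\hookrightarrow K[x]$.
   Context: Let $K$ be a complete field with a non-trivial discrete valuation $\nu:K\to\mathbb R\cup\{\infty\}$ and a uniformizing parameter $p\in K$, with $\nu$ normalized so that $\nu(p)=1$. Let $\mathcal O_K$ be its ring of integers and $\mathfrak K$ its residue field. Let $R\subseteq\mathcal O_K$ be a dense noetherian subring with $p\in R$. Write $x=(x_1,\dots,x_n)$. The map $\pi:R[[t]][x]\to\mathcal O_K[x]$, $t\mapsto p$, is surjective with kernel $\langle p-t\rangle$. We also write $\pi$ for its composite with the inclusion $\mathcal O_K[x]\subseteq K[x]$. Initial forms over $K$: for $f=\sum_\alpha c_\alpha x^\alpha\in K[x]$ and $w\in\mathbb R^n$, $\operatorname{in}_{\nu,w}(f)=\sum \overline{c_\alpha p^{-\nu(c_\alpha)}}\,x^\alpha\in\mathfrak K[x]$. The sum runs over those $\alpha$ with $c_\alpha\neq0$ for which $w\cdot\alpha-\nu(c_\alpha)$ is maximal. $\operatorname{in}_{\nu,w}(I)$ is the ideal of $\mathfrak K[x]$ generated by all $\operatorname{in}_{\nu,w}(f)$ with $f\in I$. Initial forms over $R[[t]]$: for $f=\sum c_{\alpha,\beta}t^\beta x^\alpha\in R[[t]][x]$ and $w\in\mathbb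 R_{<0}\times\mathbb R^n$, $\operatorname{in}_w(f)\in R[t,x]$ is the sum of the terms with $w\cdot(\beta,\alpha)$ maximal. $\operatorname{in}_w(J)\unlhd R[t,x]$ is generated by the $\operatorname{in}_w(f)$ with $f\in J$. For $J\unlhd R[t,x]$, $\overline{J}|_{t=1}$ is the image of $J$ under the map $R[t,x]\to\mathfrak K[x]$ that reduces coefficients to $\mathfrak K$ and sets $t=1$. *)

(* Defs.v *)
From HB Require Import structures.
From mathcomp Require Import all_boot all_order all_algebra.
From mathcomp Require Import mpoly.
From mathcomp Require Import reals.
Set Implicit Arguments. Unset Strict Implicit. Unset Printing Implicit Defensive.
Import Order.TTheory GRing.Theory Num.Theory.
Local Open Scope ring_scope.

Section Defs.
Variable K : fieldType.
Variable nu : K -> int.   (* normalized discrete valuation; nu 0 (= +oo) is never used *)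
Variable p : K.

Definition vclose (N : int) (x : K) : Prop := x = 0 \/ N <= nu x.

Definition is_dvaluation : Prop :=
  [/\ p != 0, nu p = 1,
      forall x y, x != 0 -> y != 0 -> nu (x * y) = nu x + nu y &
      forall x y, x != 0 -> y != 0 -> x + y != 0 -> Num.min (nu x) (nu y) <= nu (x + y)].

Definition vconverges (u : nat -> K) (l : K) : Prop :=
  forall N : nat, exists M : nat, forall m, (M <= m)%N -> vclose N%:Z (u m - l).

Definition vcauchy (u : nat -> K) : Prop :=
  forall N : nat, exists M : nat, forall m m', (M <= m)%N -> (M <= m')%N ->
    vclose N%:Z (u m - u m').

Definition vcomplete : Prop := forall u, vcauchy u -> exists l, vconverges u l.

Definition OK (x : K) : Prop := vclose 0 x.

Definition is_residue_map (k : fieldType) (res : K -> k) : Prop :=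
  [/\ res 1 = 1,
      forall x y, OK x -> OK y -> res (x + y) = res x + res y,
      forall x y, OK x -> OK y -> res (x * y) = res x * res y,
      forall z : k, exists2 x, OK x & res x = z &
      forall x, OK x -> (res x = 0 <-> vclose 1 x)].

Definition is_subring (Rs : K -> Prop) : Prop :=
  [/\ Rs 0, Rs 1, forall x, Rs x -> Rs (- x),
      forall x y, Rs x -> Rs y -> Rs (x + y) &
      forall x y, Rs x -> Rs y -> Rs (x * y)].

Definition is_noetherian_sub (Rs : K -> Prop) : Prop :=
  forall J : K -> Prop,
    (forall x, J x -> Rs x) -> J 0 -> (forall x y, J x -> J y -> J (x + y)) ->
    (forall r x, Rs r -> J x -> J (r * x)) ->
    exists gs : seq K, (forall g, g \in gs -> J g) /\
      (forall x, J x <-> exists cs : seq K, [/\ size cs = size gs,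
          forall c, c \in cs -> Rs c &
          x = \sum_(i < size gs) cs`_i * gs`_i]).

Definition dense_in_OK (Rs : K -> Prop) : Prop :=
  forall x, OK x -> forall N : nat, exists2 r, Rs r & vclose N%:Z (x - r).

End Defs.

Definition is_ideal (T : comRingType) (I : T -> Prop) : Prop :=
  [/\ I 0, forall a b, I a -> I b -> I (a + b) & forall r a, I a -> I (r * a)].

(* the set of finite combinations sum_i h_i g_i with h_i in S and g_i in G:
   the ideal generated by G inside the subring S of T *)
Definition gen_ideal (T : comRingType) (S G : T -> Prop) (x : T) : Prop :=
  exists s : seq (T * T), (forall q, q \in s -> S q.1 /\ G q.2) /\
    x = \sum_(q <- s) q.1 * q.2.

Section Polys.
Variable K : fieldType.
Variable n : nat.

(* Elements of R[[t]][x] are encoded as coefficient functions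
   f : 'X_{1..n} -> nat -> K,  f a b = coefficient of t^b x^a. *)
Definition RtX_series (Rs : K -> Prop) (f : 'X_{1..n} -> nat -> K) : Prop :=
  (forall a b, Rs (f a b)) /\
  exists S : seq 'X_{1..n}, forall a b, f a b != 0 -> a \in S.

(* pi : R[[t]][x] -> O_K[x] c K[x], t |-> p  (as a relation: pi f = g) *)
Definition pi_rel (nu : K -> int) (p : K) (f : 'X_{1..n} -> nat -> K)
    (g : {mpoly K[n]}) : Prop :=
  forall a, vconverges nu (fun N => \sum_(b < N) f a b * p ^+ b) g@_a.

(* R[t,x] = elements of K[t,x] (t = variable 0, x_i = variable i+1)
   with coefficients in Rs *)
Definition RtX_poly (Rs : K -> Prop) (h : {mpoly K[n.+1]}) : Prop :=
  forall m, Rs h@_m.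

Definition mtail (m : 'X_{1..n.+1}) : 'X_{1..n} :=
  [multinom m (lift ord0 i) | i < n].

Variable rR : realType.
Variable w : 'I_n -> rR.

Definition wdot (a : 'X_{1..n}) : rR := \sum_(i < n) w i * (a i)%:R.

Definition wt_t (a : 'X_{1..n}) (b : nat) : rR := - b%:R + wdot a.

Definition maxterm (f : 'X_{1..n} -> nat -> K) (a : 'X_{1..n}) (b : nat) : Prop :=
  f a b != 0 /\ forall a' b', f a' b' != 0 -> wt_t a' b' <= wt_t a b.

Definition is_initial_form (f : 'X_{1..n} -> nat -> K) (h : {mpoly K[n.+1]}) : Prop :=
  forall m : 'X_{1..n.+1},
    (maxterm f (mtail m) (m ord0) -> h@_m = f (mtail m) (m ord0)) /\
    (~ maxterm f (mtail m) (m ord0) -> h@_m = 0).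

(* reduce coefficients to the residue field and set t = 1 *)
Definition red_t1 (k : fieldType) (res : K -> k) (h : {mpoly K[n.+1]}) : {mpoly k[n]} :=
  \sum_(m <- msupp h) res h@_m *: 'X_[mtail m].

Definition wt_nu (nu : K -> int) (f : {mpoly K[n]}) (a : 'X_{1..n}) : rR :=
  wdot a - (nu f@_a)%:~R.

Definition in_nu (nu : K -> int) (p : K) (k : fieldType) (res : K -> k)
    (f : {mpoly K[n]}) : {mpoly k[n]} :=
  \sum_(a <- msupp f | all (fun a' => wt_nu nu f a' <= wt_nu nu f a) (msupp f))
     res (f@_a * p ^ (- nu f@_a)) *: 'X_[a].

End Polys.

(* Main.v *)
Require Import Defs.
From HB Require Import structures.
From mathcomp Require Import all_boot all_order all_algebra.
From mathcomp Require Import mpoly.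
From mathcomp Require Import reals.
From mathcomp Require Import ring lra zify.
From Stdlib Require Import ClassicalEpsilon.
Set Implicit Arguments. Unset Strict Implicit. Unset Printing Implicit Defensive.
Import Order.TTheory GRing.Theory Num.Theory.
Local Open Scope ring_scope.

Section Val.
Variable K : fieldType.
Variable nu : K -> int.
Variable p : K.
Hypothesis Hnu : is_dvaluation nu p.

Lemma p_neq0 : p != 0. Proof. by case: Hnu. Qed.
Lemma nup : nu p = 1. Proof. by case: Hnu. Qed.
Lemma nuM x y : x != 0 -> y != 0 -> nu (x * y) = nu x + nu y.
Proof. by case: Hnu => _ _ H _; apply: H. Qed.
Lemma nuD x y : x != 0 -> y != 0 -> x + y != 0 -> Num.min (nu x) (nu y) <= nu (x + y).
Proof. by case: Hnu => _ _ _ H; apply: H. Qed.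

Lemma nu1 : nu 1 = 0.
Proof. have := nuM (oner_neq0 K) (oner_neq0 K); rewrite mulr1 => H; set a := nu 1 in H *; lia. Qed.

Lemma nuN x : nu (- x) = nu x.
Proof.
have [->|x0] := eqVneq x 0; first by rewrite oppr0.
have m10 : (-1 : K) != 0 by rewrite oppr_eq0 oner_neq0.
have := nuM m10 m10; rewrite mulrNN mulr1 nu1 => H.
have H1 : nu (-1) = 0 by lia.
by rewrite -mulN1r nuM // H1 add0r.
Qed.

Lemma nuXn j : nu (p ^+ j) = j%:Z.
Proof.
elim: j => [|j IH]; first by rewrite expr0 nu1.
by rewrite exprS nuM ?expf_neq0 ?p_neq0 // IH nup; lia.
Qed.

Lemma nuXz (z : int) : nu (p ^ z) = z.
Proof.
case: z => j; first by rewrite nuXn.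
rewrite NegzE -invr_expz.
have h : p ^+ j.+1 != 0 by rewrite expf_neq0 ?p_neq0.
have := nuM h (invr_neq0 h); rewrite divff // nu1 nuXn => H.
have -> : (p ^ (j.+1)%:Z)^-1 = (p ^+ j.+1)^-1 by [].
lia.
Qed.

Lemma vcloseD N x y : vclose nu N x -> vclose nu N y -> vclose nu N (x + y).
Proof.
case=> [->|hx]; first by rewrite add0r.
case=> [->|hy]; first by rewrite addr0; right.
have [->|s0] := eqVneq (x + y) 0; first by left.
have [->|x0] := eqVneq x 0; first by rewrite add0r; right.
have [->|y0] := eqVneq y 0; first by rewrite addr0; right.
right; apply: le_trans (nuD x0 y0 s0); rewrite le_min hx hy //.
Qed.

Lemma vcloseN N x : vclose nu N x -> vclose nu N (- x).
Proof. by case=> [->|h]; [left; rewrite oppr0|right; rewrite nuN]. Qed.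

Lemma vcloseB N x y : vclose nu N x -> vclose nu N y -> vclose nu N (x - y).
Proof. by move=> hx hy; apply: vcloseD => //; apply: vcloseN. Qed.

Lemma vclose0 N : vclose nu N 0. Proof. by left. Qed.

Lemma vcloseM N M x y : vclose nu N x -> vclose nu M y -> vclose nu (N + M) (x * y).
Proof.
case=> [->|hx]; first by rewrite mul0r; left.
case=> [->|hy]; first by rewrite mulr0; left.
have [->|x0] := eqVneq x 0; first by rewrite mul0r; left.
have [->|y0] := eqVneq y 0; first by rewrite mulr0; left.
by right; rewrite nuM // lerD.
Qed.

Lemma vcloseW N M x : M <= N -> vclose nu N x -> vclose nu M x.
Proof. by move=> hMN [->|h]; [left|right; apply: le_trans h]. Qed.

Lemma vclose_sum N (I : Type) (s : seq I) (P : pred I) (F : I -> K) :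
  (forall i, P i -> vclose nu N (F i)) -> vclose nu N (\sum_(i <- s | P i) F i).
Proof. by move=> H; apply: (big_ind (vclose nu N)) => //; [apply: vclose0|apply: vcloseD]. Qed.

Lemma vclose_all x : (forall N : nat, vclose nu N%:Z x) -> x = 0.
Proof.
move=> H; have [//|x0] := eqVneq x 0.
case: (H (absz (nu x)).+1) => [//|h]; exfalso; move: h; lia.
Qed.

Lemma vclose_Xn j x : vclose nu 0 x -> vclose nu j%:Z (p ^+ j * x).
Proof. by move=> h; rewrite -[j%:Z]addr0; apply: vcloseM => //; right; rewrite nuXn. Qed.

Lemma nu_strict v x y : x != 0 -> nu x = v -> vclose nu (v + 1) y ->
  x + y != 0 /\ nu (x + y) = v.
Proof.
move=> x0 hx [->|hy]; first by rewrite addr0.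
have [->|y0] := eqVneq y 0; first by rewrite addr0.
have s0 : x + y != 0.
  apply/eqP => e; have : y = - x by rewrite -(addKr x y) e addr0.
  by move=> ey; move: hy; rewrite ey nuN hx; lia.
split => //.
have h1 := nuD x0 y0 s0; move: h1; rewrite ge_min => h1.
have h2 : Num.min (nu (x + y)) (nu (- y)) <= nu x.
  by have := nuD s0 (_ : - y != 0); rewrite addrK; apply; rewrite ?x0 ?oppr_eq0.
move: h2; rewrite nuN ge_min.
move: h1 => /orP[h1|h1] /orP[h2|h2]; lia.
Qed.
End Val.

Section Res.
Variable K : fieldType.
Variable nu : K -> int.
Variable p : K.
Variable k : fieldType.
Variable res : K -> k.
Variable Rs : K -> Prop.
Hypothesis Hnu : is_dvaluation nu p.
Hypothesis Hres : is_residue_map nu res.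
Hypothesis HRsub : is_subring Rs.
Hypothesis HROK : forall x, Rs x -> OK nu x.
Hypothesis HRdense : dense_in_OK nu Rs.

Lemma resD x y : OK nu x -> OK nu y -> res (x + y) = res x + res y.
Proof. by case: Hres => _ H _ _ _; apply: H. Qed.
Lemma resM x y : OK nu x -> OK nu y -> res (x * y) = res x * res y.
Proof. by case: Hres => _ _ H _ _; apply: H. Qed.
Lemma res_eq0 x : OK nu x -> (res x = 0 <-> vclose nu 1 x).
Proof. by case: Hres => _ _ _ _ H; apply: H. Qed.

Lemma OK0 : OK nu 0. Proof. by left. Qed.
Lemma res0 : res 0 = 0.
Proof. by apply: (proj2 (res_eq0 OK0)); left. Qed.

Lemma OKD x y : OK nu x -> OK nu y -> OK nu (x + y).
Proof. exact: (vcloseD Hnu). Qed.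
Lemma OKM x y : OK nu x -> OK nu y -> OK nu (x * y).
Proof. by move=> hx hy; have := vcloseM Hnu hx hy; rewrite addr0. Qed.

Lemma res_close x y : OK nu x -> OK nu y -> vclose nu 1 (x - y) -> res x = res y.
Proof.
move=> hx hy hc.
have hd : OK nu (x - y) by apply: vcloseW hc.
by rewrite -(subrK y x) addrC resD // (proj2 (res_eq0 hd) hc) addr0.
Qed.

Lemma res_nz x : OK nu x -> res x != 0 -> x != 0 /\ nu x = 0.
Proof.
move=> hx hr.
have x0 : x != 0 by apply: contraNneq hr => ->; rewrite res0.
split => //; case: hx => [/eqP|h]; first by rewrite (negbTE x0).
have : ~ vclose nu 1 x by move=> /(proj2 (res_eq0 (or_intror h))) /eqP; rewrite (negbTE hr).
by case/boolP: (nu x <= 0) => h2; [lia | move=> /(_ (or_intror _)); lia].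
Qed.

Lemma nz_res x : x != 0 -> nu x = 0 -> res x != 0.
Proof.
move=> x0 hx; have ok : OK nu x by right; rewrite hx.
apply/eqP => /(res_eq0 ok); case=> [/eqP|]; [by rewrite (negbTE x0)|by rewrite hx].
Qed.

Lemma Rs0 : Rs 0. Proof. by case: HRsub. Qed.
Lemma Rs1 : Rs 1. Proof. by case: HRsub. Qed.
Lemma RsN x : Rs x -> Rs (- x). Proof. by case: HRsub => _ _ H _ _; apply: H. Qed.
Lemma RsD x y : Rs x -> Rs y -> Rs (x + y). Proof. by case: HRsub => _ _ _ H _; apply: H. Qed.
Lemma RsM x y : Rs x -> Rs y -> Rs (x * y). Proof. by case: HRsub => _ _ _ _ H; apply: H. Qed.

Lemma rd_ex x : exists r, OK nu x -> Rs r /\ vclose nu 1 (x - r).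
Proof.
case: (classic (OK nu x)) => h; last by exists 0.
by have [r hr hc] := HRdense h 1; exists r.
Qed.
Definition rd x := proj1_sig (constructive_indefinite_description _ (rd_ex x)).
Lemma rdP x : OK nu x -> Rs (rd x) /\ vclose nu 1 (x - rd x).
Proof. rewrite /rd; case: constructive_indefinite_description => r /=; exact. Qed.

Lemma lft_ex z : exists r, Rs r /\ res r = z.
Proof.
have [_ _ _ Hs _] := Hres.
have [x hx <-] := Hs z.
have [h1 h2] := rdP hx; exists (rd x); split => //.
by symmetry; apply: res_close => //; apply: HROK.
Qed.
Definition lft z := proj1_sig (constructive_indefinite_description _ (lft_ex z)).
Lemma lftP z : Rs (lft z) /\ res (lft z) = z.
Proof. rewrite /lft; case: constructive_indefinite_description => r /=; exact. Qed.

Fixpoint seqU (u : K) (j : nat) : K :=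
  if j is j'.+1 then (seqU u j' - rd (seqU u j')) / p else u.

Lemma nuVp : nu p^-1 = -1.
Proof.
have p0 := p_neq0 Hnu.
have := nuM Hnu p0 (invr_neq0 p0); rewrite divff // (nu1 Hnu) (nup Hnu) => H.
set a := nu p^-1 in H *; lia.
Qed.

Lemma seqU_OK u j : OK nu u -> OK nu (seqU u j).
Proof.
move=> hu; elim: j => [//|j IH] /=.
have [_ h] := rdP IH.
have hp : vclose nu (-1) p^-1 by right; rewrite nuVp.
by have := vcloseM Hnu h hp; rewrite subrr.
Qed.

Lemma seqU_eq u j : seqU u j = rd (seqU u j) + p * seqU u j.+1.
Proof. by rewrite /= mulrC divfK ?(p_neq0 Hnu) // addrC subrK. Qed.

Definition Tsum u j := \sum_(i < j) rd (seqU u i) * p ^+ i.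

Lemma Tsum_eq u j : u = Tsum u j + p ^+ j * seqU u j.
Proof.
elim: j => [|j IH]; first by rewrite /Tsum big_ord0 add0r expr0 mul1r.
rewrite /Tsum big_ord_recr /= -/(Tsum u j).
have E := seqU_eq u j.
set s1 := seqU u j.+1 in E *; set s0 := seqU u j in E IH *.
rewrite {1}IH {1}E exprSr; rewrite (_ : (s0 - rd s0) / p = s1) //; ring.
Qed.

Definition dig (c : K) (b : nat) : K :=
  if c == 0 then 0 else
  if (b < absz (nu c))%N then 0 else rd (seqU (c * p ^ (- nu c)) (b - absz (nu c))).

Lemma dig_Rs c b : OK nu c -> Rs (dig c b).
Proof.
move=> hc; rewrite /dig; case: eqP => [_|/eqP c0]; first exact: Rs0.
case: ifP => _; first exact: Rs0.
apply: (proj1 (rdP _)); apply: seqU_OK.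
case: hc => [/eqP|h]; first by rewrite (negbTE c0).
have := vcloseM Hnu (or_intror (lexx (nu c))) (or_intror (_ : - nu c <= nu (p ^ (- nu c)))).
by rewrite subrr; apply; rewrite nuXz.
Qed.

Lemma dig0 b : dig 0 b = 0. Proof. by rewrite /dig eqxx. Qed.

Section DigNZ.
Variable c : K.
Hypothesis c0 : c != 0.
Hypothesis hc : OK nu c.
Let v := absz (nu c).
Let u := c * p ^ (- nu c).
Lemma nuc : nu c = v%:Z.
Proof. by case: hc => [/eqP|h]; [rewrite (negbTE c0)|rewrite /v; lia]. Qed.
Lemma c_eq : c = p ^+ v * u.
Proof.
rewrite /u mulrCA.
have -> : p ^+ v = p ^ (nu c) by rewrite nuc.
by rewrite -expfzDr ?(p_neq0 Hnu) // subrr expr0z mulr1.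
Qed.
Lemma nuu : nu u = 0.
Proof.
rewrite /u (nuM Hnu) ?(nuXz Hnu) ?subrr //; last by rewrite expfz_neq0 // (p_neq0 Hnu).
Qed.
Lemma u_OK : OK nu u. Proof. by right; rewrite nuu. Qed.
Lemma u0 : u != 0. Proof. by rewrite /u mulf_neq0 // expfz_neq0 // (p_neq0 Hnu). Qed.

Lemma dig_lt b : (b < v)%N -> dig c b = 0.
Proof. by move=> h; rewrite /dig (negbTE c0) -/v h. Qed.
Lemma dig_ge j : dig c (v + j) = rd (seqU u j).
Proof. by rewrite /dig (negbTE c0) -/v ltnNge leq_addr /= addKn. Qed.

Lemma S_eq j : \sum_(b < v + j) dig c b * p ^+ b = p ^+ v * Tsum u j.
Proof.
elim: j => [|j IH].
  rewrite addn0 /Tsum big_ord0 mulr0 big1 // => i _; rewrite dig_lt ?mul0r //.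
rewrite addnS big_ord_recr /= IH /Tsum big_ord_recr /= dig_ge exprD; ring.
Qed.

Lemma dig_conv : vconverges nu (fun N => \sum_(b < N) dig c b * p ^+ b) c.
Proof.
move=> N; exists (v + N)%N => m hm.
have -> : m = (v + (m - v))%N by lia.
have E := Tsum_eq u (m - v).
rewrite S_eq {1}c_eq -mulrBr {2}E opprD addrA subrr add0r mulrN.
apply: (vcloseN Hnu); rewrite mulrA -exprD subnKC; last lia.
apply: (vcloseW (M := N%:Z)) (vclose_Xn Hnu _ _); first lia.
exact: seqU_OK u_OK.
Qed.

Lemma dig_lead : res (dig c v) = res u.
Proof.
have := dig_ge 0; rewrite addn0 /= => ->.
have [h1 h2] := rdP u_OK.
by symmetry; apply: res_close => //; [apply: u_OK|apply: HROK].
Qed.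
Lemma dig_lead_nz : res (dig c v) != 0.
Proof. by rewrite dig_lead; apply: nz_res; [apply: u0|apply: nuu]. Qed.
End DigNZ.

Lemma dig_conv_all c : OK nu c -> vconverges nu (fun N => \sum_(b < N) dig c b * p ^+ b) c.
Proof.
have [->|c0] := eqVneq c 0; last by move=> hc; apply: dig_conv.
move=> _ N; exists 0%N => m _; rewrite big1 ?subr0; first by left.
by move=> i _; rewrite dig0 mul0r.
Qed.
End Res.

Section Mono.
Variable n : nat.
Definition ext (b : nat) (a : 'X_{1..n}) : 'X_{1..n.+1} :=
  [multinom (if unlift ord0 i is Some j then a j else b) | i < n.+1].

Lemma mtail_ext b a : mtail (ext b a) = a.
Proof. by apply/mnmP => i; rewrite /mtail /ext !mnmE liftK. Qed.
Lemma ext_ord0 b a : (ext b a) ord0 = b.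
Proof. by rewrite /ext mnmE unlift_none. Qed.
Lemma ext_mtail (m : 'X_{1..n.+1}) : ext (m ord0) (mtail m) = m.
Proof.
apply/mnmP => i; rewrite /ext mnmE; case: unliftP => [j ->|->] //.
by rewrite /mtail mnmE.
Qed.
Lemma mtailD (m1 m2 : 'X_{1..n.+1}) : mtail (m1 + m2) = (mtail m1 + mtail m2)%MM.
Proof. by apply/mnmP => i; rewrite /mtail !mnmE. Qed.
End Mono.

Section SumLemmas.
Variable (T : eqType) (R : nmodType).
Lemma big_uniq_ext (s1 s : seq T) (G : T -> R) :
  uniq s1 -> uniq s -> {subset s1 <= s} -> (forall m, m \notin s1 -> G m = 0) ->
  \sum_(m <- s1) G m = \sum_(m <- s) G m.
Proof.
move=> u1 u sub HG.
have P : perm_eq s (s1 ++ [seq m <- s | m \notin s1]).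
  apply: uniq_perm => //.
    rewrite cat_uniq u1 filter_uniq // andbT.
    by apply/hasPn => m; rewrite mem_filter => /andP[].
  move=> m; rewrite mem_cat mem_filter; case: (boolP (m \in s1)) => hm /=.
    by rewrite (sub _ hm).
  by [].
rewrite (perm_big _ P) big_cat /= [X in _ + X]big1_seq ?addr0 // => m /andP[_].
by rewrite mem_filter => /andP[hm _]; apply: HG.
Qed.

Lemma big_single (s : seq T) (P : pred T) (G : T -> R) m0 :
  uniq s -> (forall m, m \in s -> P m -> m != m0 -> G m = 0) ->
  \sum_(m <- s | P m) G m = if (m0 \in s) && P m0 then G m0 else 0.
Proof.
move=> us H; case: ifP => [/andP[h0 p0]|h].
  rewrite big_mkcond (bigD1_seq m0) //= p0 big1_seq ?addr0 // => m /andP[ne ms].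
  by case: ifP => // pm; apply: H.
rewrite big1_seq // => m /andP[pm ms]; apply: H => //; apply/eqP => e.
by move: h; rewrite -e ms pm.
Qed.
End SumLemmas.

Section Red.
Variable K : fieldType.
Variable nu : K -> int.
Variable p : K.
Variable k : fieldType.
Variable res : K -> k.
Variable Rs : K -> Prop.
Hypothesis Hnu : is_dvaluation nu p.
Hypothesis Hres : is_residue_map nu res.
Hypothesis HRsub : is_subring Rs.
Hypothesis HROK : forall x, Rs x -> OK nu x.
Variable n : nat.

Local Notation RsP := (RtX_poly Rs).

Lemma RsP0 : RsP (0 : {mpoly K[n.+1]}).
Proof. by move=> m; rewrite mcoeff0; apply: Rs0. Qed.
Lemma RsPD (h1 h2 : {mpoly K[n.+1]}) : RsP h1 -> RsP h2 -> RsP (h1 + h2).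
Proof. by move=> a b m; rewrite mcoeffD; apply: RsD. Qed.
Lemma RsP_sum (I : Type) (s : seq I) (P : pred I) (F : I -> {mpoly K[n.+1]}) :
  (forall i, P i -> RsP (F i)) -> RsP (\sum_(i <- s | P i) F i).
Proof. by move=> H; apply: (big_ind RsP) => //; [apply: RsP0|apply: RsPD]. Qed.
Lemma RsPM (h1 h2 : {mpoly K[n.+1]}) : RsP h1 -> RsP h2 -> RsP (h1 * h2).
Proof.
move=> a b m; rewrite mcoeffM; apply: (big_ind Rs); [exact: Rs0|exact: RsD|].
by move=> i _; apply: RsM.
Qed.
Lemma RsPZX c m : Rs c -> RsP (c *: 'X_[m] : {mpoly K[n.+1]}).
Proof.
move=> hc m'; rewrite mcoeffZ mcoeffX; case: eqP => _; rewrite ?mulr1 ?mulr0 //.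
exact: Rs0.
Qed.

Lemma red_coef (h : {mpoly K[n.+1]}) a :
  (red_t1 res h)@_a = \sum_(m <- msupp h | mtail m == a) res h@_m.
Proof.
rewrite /red_t1 raddf_sum [RHS]big_mkcond /=.
by apply: eq_bigr => m _; rewrite mcoeffZ mcoeffX; case: eqP; rewrite ?mulr1 ?mulr0.
Qed.

Lemma red_coef_ext (h : {mpoly K[n.+1]}) a s :
  uniq s -> {subset msupp h <= s} ->
  (red_t1 res h)@_a = \sum_(m <- s | mtail m == a) res h@_m.
Proof.
move=> us sub; rewrite red_coef big_mkcond [RHS]big_mkcond /=.
apply: big_uniq_ext => // m; rewrite -mcoeff_eq0 => /eqP ->.
by rewrite (res0 Hres) ?if_same.
Qed.

Lemma red0 : red_t1 res (0 : {mpoly K[n.+1]}) = 0.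
Proof. by rewrite /red_t1 msupp0 big_nil. Qed.

Lemma redD (h1 h2 : {mpoly K[n.+1]}) : RsP h1 -> RsP h2 ->
  red_t1 res (h1 + h2) = red_t1 res h1 + red_t1 res h2.
Proof.
move=> r1 r2; apply/mpolyP => a.
set s := undup (msupp h1 ++ msupp h2).
have us : uniq s by apply: undup_uniq.
have R h : {subset msupp h <= s} -> _ := @red_coef_ext h a s us.
rewrite mcoeffD !R //.
- rewrite -big_split /=; apply: eq_bigr => m _; rewrite mcoeffD (resD Hres) //; exact: HROK.
- by move=> m hm; rewrite mem_undup mem_cat hm orbT.
- by move=> m hm; rewrite mem_undup mem_cat hm.
- by move=> m /msuppD_le; rewrite mem_undup.
Qed.

Lemma red_sum (I : Type) (s : seq I) (F : I -> {mpoly K[n.+1]}) :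
  (forall i, RsP (F i)) -> red_t1 res (\sum_(i <- s) F i) = \sum_(i <- s) red_t1 res (F i).
Proof.
move=> H; elim: s => [|i s IH]; first by rewrite !big_nil red0.
rewrite !big_cons redD ?IH //; exact: RsP_sum.
Qed.

Lemma redZX c (m : 'X_{1..n.+1}) : red_t1 res (c *: 'X_[m]) = res c *: 'X_[mtail m].
Proof.
have [->|c0] := eqVneq c 0; first by rewrite scale0r red0 (res0 Hres) scale0r.
by rewrite /red_t1 msuppMCX // big_seq1 mcoeffZ mcoeffX eqxx mulr1.
Qed.

Lemma redM (h1 h2 : {mpoly K[n.+1]}) : RsP h1 -> RsP h2 ->
  red_t1 res (h1 * h2) = red_t1 res h1 * red_t1 res h2.
Proof.
move=> r1 r2.
have E : h1 * h2 = \sum_(m1 <- msupp h1) \sum_(m2 <- msupp h2)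
     ((h1@_m1 * h2@_m2) *: 'X_[(m1 + m2)%MM]).
  rewrite {1}(mpolyE h1) {1}(mpolyE h2) big_distrl /=.
  apply: eq_bigr => m1 _; rewrite big_distrr /=; apply: eq_bigr => m2 _.
  by rewrite -scalerAl -scalerAr scalerA mpolyXD.
rewrite E red_sum; last by move=> i; apply: RsP_sum => m2 _; apply: RsPZX; apply: RsM.
rewrite /red_t1 big_distrl /=; apply: eq_bigr => m1 _.
rewrite -/(red_t1 res _) red_sum; last by move=> m2; apply: RsPZX; apply: RsM.
rewrite big_distrr /=; apply: eq_bigr => m2 _.
rewrite redZX (resM Hres) ?mtailD ?mpolyXD; try exact: HROK.
by rewrite -scalerAl -scalerAr scalerA.
Qed.
End Red.

Section IntR.
Variable rR : realType.
Lemma int_le_R (z : int) (b : nat) : (b%:Z <= z) -> (b%:R <= z%:~R :> rR).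
Proof. by move=> h; rewrite pmulrn ler_int. Qed.
Lemma int_le_R1 (z : int) (b : nat) : ((b.+1)%:Z <= z) -> (b%:R + 1 <= z%:~R :> rR).
Proof. by move=> h; rewrite natr1 pmulrn ler_int. Qed.
Lemma int_eq_R (z : int) (b : nat) : z = b%:Z -> (z%:~R = b%:R :> rR).
Proof. by move=> ->; rewrite pmulrn. Qed.
End IntR.

Section InCoef.
Variable K : fieldType.
Variable n : nat.
Variable rR : realType.
Variable w : 'I_n -> rR.
Variable nu : K -> int.
Variable p : K.
Variable k : fieldType.
Variable res : K -> k.
Lemma in_coef (g : {mpoly K[n]}) a :
  (in_nu w nu p res g)@_a =
  if (a \in msupp g) && all (fun a' => wt_nu w nu g a' <= wt_nu w nu g a) (msupp g)
  then res (g@_a * p ^ (- nu g@_a)) else 0.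
Proof.
rewrite /in_nu raddf_sum /=.
rewrite (big_single (m0 := a)) ?msupp_uniq //.
  by rewrite mcoeffZ mcoeffX eqxx mulr1.
by move=> m _ _ ne; rewrite mcoeffZ mcoeffX (negbTE ne) mulr0.
Qed.
End InCoef.

Section LemA.
Variable K : fieldType.
Variable nu : K -> int.
Variable p : K.
Variable k : fieldType.
Variable res : K -> k.
Variable Rs : K -> Prop.
Hypothesis Hnu : is_dvaluation nu p.
Hypothesis Hres : is_residue_map nu res.
Hypothesis HRsub : is_subring Rs.
Hypothesis HROK : forall x, Rs x -> OK nu x.
Variable n : nat.
Variable rR : realType.
Variable w : 'I_n -> rR.
Variable F : 'X_{1..n} -> nat -> K.
Variable g : {mpoly K[n]}.
Hypothesis HF : RtX_series Rs F.
Hypothesis Hpi : pi_rel nu p F g.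

Lemma F_OK a b : OK nu (F a b).
Proof. by apply: HROK; case: HF. Qed.

Lemma tail_close a b : (forall b', (b' < b)%N -> F a b' = 0) ->
  vclose nu (b.+1)%:Z (g@_a - F a b * p ^+ b).
Proof.
move=> low.
have [M HM] := Hpi a (b.+1).
set m := maxn M b.+1.
have := HM m (leq_maxl _ _).
have bm : (b < m)%N by rewrite leq_maxr.
rewrite (bigD1 (Ordinal bm)) //= => H.
have R : vclose nu (b.+1)%:Z (\sum_(i < m | i != Ordinal bm) F a i * p ^+ i).
  apply: (vclose_sum Hnu) => i ne.
  have [lt|ge] := ltnP i b; first by rewrite low // mul0r; left.
  have gt : (b < i)%N.
    by rewrite ltn_neqAle ge andbT; apply: contra ne => /eqP e; apply/eqP/val_inj.
  rewrite mulrC; apply: (vcloseW (N := i%:Z)); first lia.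
  by apply: (vclose_Xn Hnu); apply: F_OK.
have E : g@_a - F a b * p ^+ b =
   (\sum_(i < m | i != Ordinal bm) F a i * p ^+ i) -
   (F a b * p ^+ b + \sum_(i < m | i != Ordinal bm) F a i * p ^+ i - g@_a).
  ring.
by rewrite E; apply: (vcloseB Hnu).
Qed.

Lemma g_zero a : (forall b, F a b = 0) -> g@_a = 0.
Proof.
move=> z; apply: (vclose_all (nu := nu)) => N.
have [M HM] := Hpi a N; have := HM M (leqnn _).
rewrite big1 ?sub0r; last by move=> i _; rewrite z mul0r.
by move=> /(vcloseN Hnu); rewrite opprK.
Qed.

Lemma min_nz a : g@_a != 0 ->
  exists b, F a b != 0 /\ forall b', (b' < b)%N -> F a b' = 0.
Proof.
move=> g0.
have ex : exists b, F a b != 0.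
  apply: NNPP => H; move/eqP: g0; apply; apply: g_zero => b.
  by case: (eqVneq (F a b) 0) => // hb; exfalso; apply: H; exists b.
case: (@ex_minnP (fun b => F a b != 0) ex) => b hb hmin; exists b; split => // b' lt.
apply/eqP; apply: contraTT lt => hb'; rewrite -leqNgt; exact: hmin.
Qed.

Lemma nu_ge a b : (forall b', (b' < b)%N -> F a b' = 0) -> g@_a != 0 -> b%:Z <= nu g@_a.
Proof.
move=> low g0.
have h1 := tail_close low.
have h2 : vclose nu b%:Z (F a b * p ^+ b) by rewrite mulrC; apply: (vclose_Xn Hnu); apply: F_OK.
have : vclose nu b%:Z g@_a.
  rewrite -(subrK (F a b * p ^+ b) g@_a); apply: (vcloseD Hnu) => //.
  by apply: (vcloseW (N := (b.+1)%:Z)) => //; lia.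
by case=> [/eqP|//]; rewrite (negbTE g0).
Qed.

Lemma nu_eq a b : (forall b', (b' < b)%N -> F a b' = 0) -> res (F a b) != 0 ->
  g@_a != 0 /\ nu g@_a = b%:Z.
Proof.
move=> low rz.
have [F0 nF] := res_nz Hres (F_OK a b) rz.
have p0 := p_neq0 Hnu.
have x0 : F a b * p ^+ b != 0 by rewrite mulf_neq0 // expf_neq0.
have nx : nu (F a b * p ^+ b) = b%:Z by rewrite (nuM Hnu) ?expf_neq0 // nF (nuXn Hnu) add0r.
have e : (b.+1)%:Z = b%:Z + 1 by lia.
have tc := tail_close low; rewrite e in tc.
have := nu_strict Hnu x0 nx tc.
by rewrite addrC subrK.
Qed.

Lemma res_lead a b : (forall b', (b' < b)%N -> F a b' = 0) -> nu g@_a = b%:Z ->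
  res (g@_a * p ^ (- nu g@_a)) = res (F a b).
Proof.
move=> low nb.
have p0 := p_neq0 Hnu.
have hc : vclose nu 1 (g@_a * p ^ (- nu g@_a) - F a b).
  have -> : g@_a * p ^ (- nu g@_a) - F a b = (g@_a - F a b * p ^+ b) * p ^ (- nu g@_a).
    rewrite mulrBl -mulrA; congr (_ - _).
    have -> : p ^+ b = p ^ (b%:Z) by [].
    by rewrite nb -expfzDr // subrr expr0z mulr1.
  have := vcloseM Hnu (tail_close low) (or_intror (_ : - (b%:Z) <= nu (p ^ (- nu g@_a)))).
  rewrite (nuXz Hnu) nb lexx => /(_ isT).
  by rewrite (_ : (b.+1)%:Z + - b%:Z = 1) //; lia.
have okF := F_OK a b.
have okx : OK nu (g@_a * p ^ (- nu g@_a)).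
  rewrite -(subrK (F a b) (g@_a * _)); apply: (OKD Hnu) => //.
  by apply: (vcloseW (N := 1)).
by apply: (res_close Hres).
Qed.

Lemma nu_gt a b : (forall b', (b' < b)%N -> F a b' = 0) -> res (F a b) = 0 ->
  g@_a != 0 -> (b.+1)%:Z <= nu g@_a.
Proof.
move=> low rz g0.
have c1 : vclose nu 1 (F a b) by apply/(res_eq0 Hres (F_OK a b)).
have h2 : vclose nu (b.+1)%:Z (F a b * p ^+ b).
  have := vcloseM Hnu c1 (or_intror (_ : b%:Z <= nu (p ^+ b))).
  rewrite (nuXn Hnu) lexx => /(_ isT); rewrite (_ : 1 + b%:Z = (b.+1)%:Z) //; lia.
have : vclose nu (b.+1)%:Z g@_a.
  by rewrite -(subrK (F a b * p ^+ b) g@_a); apply: (vcloseD Hnu) => //; apply: tail_close.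
by case=> [/eqP|//]; rewrite (negbTE g0).
Qed.

Lemma maxterm_low a b : maxterm w F a b -> forall b', (b' < b)%N -> F a b' = 0.
Proof.
case=> nz mx b' lt; case: (eqVneq (F a b') 0) => // nz'; exfalso.
have := mx _ _ nz'; rewrite /wt_t lerD2r lerN2 ler_nat; lia.
Qed.

Lemma maxterm_uniq a b b' : maxterm w F a b -> maxterm w F a b' -> b = b'.
Proof.
move=> m1 m2; apply/eqP; rewrite eqn_leq; apply/andP; split.
  by rewrite leqNgt; apply/negP => lt; have [nz _] := m2; move: nz; rewrite (maxterm_low m1 lt) eqxx.
by rewrite leqNgt; apply/negP => lt; have [nz _] := m1; move: nz; rewrite (maxterm_low m2 lt) eqxx.
Qed.

Variable h : {mpoly K[n.+1]}.
Hypothesis Hin : is_initial_form w F h.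

Lemma red_coef_max a b : maxterm w F a b -> (red_t1 res h)@_a = res (F a b).
Proof.
move=> mb; rewrite red_coef (big_single (m0 := ext b a)) ?msupp_uniq //.
  have hm : h@_(ext b a) = F a b.
    by have [H _] := Hin (ext b a); rewrite mtail_ext ext_ord0 in H *; apply: H.
  rewrite mtail_ext eqxx andbT mcoeff_msupp hm.
  by case: mb => -> _.
move=> m _ /eqP ta ne.
have [H1 H2] := Hin m.
case: (classic (maxterm w F (mtail m) (m ord0))) => mm; last by rewrite H2 // (res0 Hres).
exfalso; move/eqP: ne; apply.
rewrite -(ext_mtail m) ta; congr ext; rewrite ta in mm.
exact: (maxterm_uniq mm mb).
Qed.

Lemma red_coef_nomax a : (forall b, ~ maxterm w F a b) -> (red_t1 res h)@_a = 0.
Proof.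
move=> nm; rewrite red_coef big1 // => m /eqP ta.
have [_ H2] := Hin m; rewrite H2 ?(res0 Hres) //; rewrite ta; exact: nm.
Qed.

Lemma initial_red0 : ~ (exists a0 b0, maxterm w F a0 b0 /\ res (F a0 b0) != 0) ->
  red_t1 res h = 0.
Proof.
move=> H; apply/mpolyP => a; rewrite mcoeff0.
case: (classic (exists b, maxterm w F a b)) => [[b mb]|nm].
  rewrite (red_coef_max mb); apply/eqP; apply: contraT => rz.
  by exfalso; apply: H; exists a, b.
by apply: red_coef_nomax => b mb; apply: nm; exists b.
Qed.

Lemma initial_red a0 b0 : maxterm w F a0 b0 -> res (F a0 b0) != 0 ->
  red_t1 res h = in_nu w nu p res g.
Proof.
move=> m0 r0.
set W := wt_t w a0 b0.
have HW : forall a' b', F a' b' != 0 -> wt_t w a' b' <= W by case: m0.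
have low0 := maxterm_low m0.
have [g00 nu0] := nu_eq low0 r0.
have a0s : a0 \in msupp g by rewrite mcoeff_msupp.
have wt0 : wt_nu w nu g a0 = W.
  by rewrite /wt_nu /W /wt_t (int_eq_R rR nu0); lra.
have bound : forall a, a \in msupp g -> wt_nu w nu g a <= W.
  move=> a; rewrite mcoeff_msupp => ga.
  have [b [nz low]] := min_nz ga.
  have := nu_ge low ga; move/(int_le_R rR) => hb.
  have := HW _ _ nz; rewrite /wt_nu /wt_t; lra.
apply/mpolyP => a; rewrite in_coef.
case: (classic (exists b, maxterm w F a b)) => [[b mb]|nm].
  rewrite (red_coef_max mb).
  have low := maxterm_low mb.
  have wtb : wt_t w a b = W.
    apply/eqP; rewrite eq_le; apply/andP; split; first by apply: HW; case: mb.
    by case: mb => _ H; apply: H; case: m0.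
  have [rz|rz] := eqVneq (res (F a b)) 0.
    rewrite rz; case: ifP => // /andP[ams /allP al].
    have ga : g@_a != 0 by rewrite -mcoeff_msupp.
    have := nu_gt low rz ga; move/(int_le_R1 rR) => hb.
    have H1 : wt_nu w nu g a0 <= wt_nu w nu g a := al _ a0s.
    rewrite wt0 /wt_nu in H1; rewrite /wt_t in wtb; exfalso; move: hb H1 wtb; clearbody W; set X := wdot w a; set Y := (nu g@_a)%:~R; set Z := b%:R; lra.
  have [ga nb] := nu_eq low rz.
  have ams : a \in msupp g by rewrite mcoeff_msupp.
  have wa : wt_nu w nu g a = W by rewrite /wt_nu (int_eq_R rR nb); move: wtb; rewrite /wt_t; lra.
  rewrite ams /=; case: allP => [_|no]; first by rewrite (res_lead low nb).
  by exfalso; apply: no => a' /bound; rewrite wa.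
rewrite red_coef_nomax; last by move=> b mb; apply: nm; exists b.
case: ifP => // /andP[ams /allP al]; exfalso.
have ga : g@_a != 0 by rewrite -mcoeff_msupp.
have [b [nz low]] := min_nz ga.
have := nu_ge low ga; move/(int_le_R rR) => hb.
have ge : wt_nu w nu g a0 <= wt_nu w nu g a := al _ a0s.
rewrite wt0 in ge.
apply: nm; exists b; split => // a' b' nz'.
have := HW _ _ nz'; move: ge; rewrite /wt_nu /wt_t; lra.
Qed.
End LemA.

Lemma seq_max (rR : realType) (T : eqType) (s : seq T) (f : T -> rR) : s != [::] ->
  exists2 a0, a0 \in s & forall a, a \in s -> f a <= f a0.
Proof.
elim: s => [//|x s IH] _.
case: (eqVneq s [::]) => [->|ns].
  by exists x; rewrite ?mem_head // => a; rewrite inE => /eqP ->.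
have [y ys hy] := IH ns.
case: (lerP (f x) (f y)) => hxy.
  exists y; first by rewrite inE ys orbT.
  by move=> a; rewrite inE => /orP[/eqP ->|]; [|apply: hy].
exists x; first exact: mem_head.
move=> a; rewrite inE => /orP[/eqP ->|/hy h]; first exact: lexx.
exact: le_trans h (ltW hxy).
Qed.

Section InitEx.
Variable K : fieldType.
Variable n : nat.
Variable rR : realType.
Variable w : 'I_n -> rR.
Variable Rs : K -> Prop.
Hypothesis HRsub : is_subring Rs.

Lemma init_exists (F : 'X_{1..n} -> nat -> K) : RtX_series Rs F ->
  exists h, is_initial_form w F h.
Proof.
case=> _ [S HS].
have ch : forall a, exists ob : option nat,
    match ob with Some b => maxterm w F a b | None => forall b, ~ maxterm w F a b end.
  move=> a; case: (classic (exists b, maxterm w F a b)) => [[b hb]|nb].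
    by exists (Some b).
  by exists None => b hb; apply: nb; exists b.
pose sel a := proj1_sig (constructive_indefinite_description _ (ch a)).
have selP a : match sel a return Prop with Some b => maxterm w F a b | None => forall b, ~ maxterm w F a b end.
  exact: (proj2_sig (constructive_indefinite_description _ (ch a))).
exists (\sum_(a <- undup S) (if sel a is Some b then F a b *: 'X_[ext b a] else 0)).
move=> m; rewrite raddf_sum /=.
rewrite (big_single (P := xpredT) (m0 := mtail m)) ?undup_uniq //=; last first.
  move=> a _ _ ne; case: (sel a) => [b|]; last by rewrite mcoeff0.
  rewrite mcoeffZ mcoeffX; case: eqP => [e|_]; last by rewrite mulr0.
  by move/eqP: ne; rewrite -e mtail_ext.
rewrite andbT mem_undup.
have := selP (mtail m); case: (sel (mtail m)) => [b' mb'|nm].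
  rewrite mcoeffZ mcoeffX.
  split => [mm|nmm].
    have e : b' = m ord0 by apply: (maxterm_uniq mb' mm).
    have inS : mtail m \in S by case: mm => nz _; apply: HS nz.
    by rewrite inS e ext_mtail eqxx mulr1.
  case: ifP => // _; case: eqP => [e|_]; last by rewrite mulr0.
  by exfalso; apply: nmm; rewrite -e ext_ord0 mtail_ext.
split => [mm|_]; first by exfalso; apply: (nm _ mm).
by rewrite mcoeff0 if_same.
Qed.

Lemma init_RsP (F : 'X_{1..n} -> nat -> K) h : RtX_series Rs F ->
  is_initial_form w F h -> RtX_poly Rs h.
Proof.
case=> HF _ Hin m; have [H1 H2] := Hin m.
case: (classic (maxterm w F (mtail m) (m ord0))) => mm.
  by rewrite H1.
by rewrite H2 //; apply: Rs0.
Qed.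
End InitEx.

Section LemB.
Variable K : fieldType.
Variable nu : K -> int.
Variable p : K.
Variable k : fieldType.
Variable res : K -> k.
Variable Rs : K -> Prop.
Hypothesis Hnu : is_dvaluation nu p.
Hypothesis Hres : is_residue_map nu res.
Hypothesis HRsub : is_subring Rs.
Hypothesis HROK : forall x, Rs x -> OK nu x.
Hypothesis HRdense : dense_in_OK nu Rs.
Variable n : nat.
Variable rR : realType.
Variable w : 'I_n -> rR.

Lemma in_nu_scale (f : {mpoly K[n]}) (j : nat) :
  in_nu w nu p res ((p ^+ j)%:MP * f) = in_nu w nu p res f.
Proof.
have p0 := p_neq0 Hnu.
have c0 : p ^+ j != 0 by rewrite expf_neq0.
set g := (p ^+ j)%:MP * f.
have gc a : g@_a = p ^+ j * f@_a by rewrite mcoeffCM.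
have ms a : (a \in msupp g) = (a \in msupp f).
  by rewrite !mcoeff_msupp gc mulf_eq0 (negbTE c0).
have nug a : a \in msupp f -> nu g@_a = j%:Z + nu f@_a.
  by rewrite mcoeff_msupp => fa; rewrite gc (nuM Hnu) // (nuXn Hnu).
have wg a : a \in msupp f -> wt_nu w nu g a = wt_nu w nu f a - j%:R.
  move=> fa; rewrite /wt_nu nug // intrD; rewrite (_ : (j%:Z)%:~R = j%:R :> rR); last by rewrite pmulrn.
  lra.
have pe : perm_eq (msupp g) (msupp f) by apply: uniq_perm; rewrite ?msupp_uniq.
apply/mpolyP => a; rewrite !in_coef ms.
case fa: (a \in msupp f) => //=.
rewrite (perm_all _ pe).
have -> : all (fun a' => wt_nu w nu g a' <= wt_nu w nu g a) (msupp f) =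
          all (fun a' => wt_nu w nu f a' <= wt_nu w nu f a) (msupp f).
  by apply: eq_in_all => a' fa'; rewrite !wg // lerD2r.
case: ifP => // _; congr res.
rewrite nug // gc -mulrA mulrCA; congr (_ * _).
have -> : p ^+ j = p ^ (j%:Z) by [].
rewrite -expfzDr //; congr (_ ^ _); lia.
Qed.

Lemma lemB (f : {mpoly K[n]}) (I : {mpoly K[n]} -> Prop) : is_ideal I -> I f ->
  exists h : {mpoly K[n.+1]},
    (exists F, [/\ RtX_series Rs F, (exists2 gI, pi_rel nu p F gI & I gI) &
                   is_initial_form w F h])
    /\ RtX_poly Rs h /\ red_t1 res h = in_nu w nu p res f.
Proof.
move=> [_ _ HIM] If.
have p0 := p_neq0 Hnu.
set j := (\sum_(a <- msupp f) `|nu f@_a|)%N.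
set g := (p ^+ j)%:MP * f.
have Ig : I g by apply: HIM.
have gc a : g@_a = p ^+ j * f@_a by rewrite mcoeffCM.
have gOK a : OK nu g@_a.
  case: (eqVneq f@_a 0) => [fa|fa]; first by rewrite gc fa mulr0; left.
  right; rewrite gc (nuM Hnu) ?expf_neq0 // (nuXn Hnu).
  have : (`|nu f@_a| <= j)%N.
    rewrite /j (big_rem a) /=; first by apply: leq_addr.
    by rewrite mcoeff_msupp.
  lia.
pose F a b := dig p HRdense g@_a b.
have HF : RtX_series Rs F.
  split; first by move=> a b; apply: (dig_Rs Hnu HRsub HRdense).
  exists (msupp g) => a b nz; rewrite mcoeff_msupp; apply: contraNneq nz => e.
  by rewrite /F e dig0.
have Hpi : pi_rel nu p F g by move=> a; apply: (dig_conv_all Hnu HRdense).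
have [h Hin] := init_exists w HF.
exists h; split; first by exists F; split => //; exists g.
split; first exact: (init_RsP HRsub HF Hin).
rewrite -(in_nu_scale f j) -/g.
case: (eqVneq g 0) => [g0|g0].
  case: (classic (exists a0 b0, maxterm w F a0 b0 /\ res (F a0 b0) != 0)).
    by move=> [a0 [b0 [m0 r0]]]; apply: (initial_red Hnu Hres HROK HF Hpi Hin m0 r0).
  move=> H; rewrite (initial_red0 Hres Hin H) /in_nu g0 msupp0 big_nil //.
have : msupp g != [::] by rewrite msupp_eq0.
move=> /(seq_max (wt_nu w nu g)) [a0 a0s hmax].
have ga0 : g@_a0 != 0 by rewrite -mcoeff_msupp.
set b0 := absz (nu g@_a0).
have nb0 : nu g@_a0 = b0%:Z := nuc ga0 (gOK a0).
have r0 : res (F a0 b0) != 0 by apply: (dig_lead_nz Hnu Hres HROK HRdense ga0).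
apply: (initial_red Hnu Hres HROK HF Hpi Hin (a0 := a0) (b0 := b0)) => //.
split; first by apply: contraNneq r0 => ->; rewrite (res0 Hres).
move=> a' b' nz.
have ga' : g@_a' != 0 by apply: contraNneq nz => e; rewrite /F e dig0.
have nb' : nu g@_a' = (absz (nu g@_a'))%:Z := nuc ga' (gOK a').
have lb : (absz (nu g@_a') <= b')%N.
  rewrite leqNgt; apply/negP => lt; move/eqP: nz; apply.
  exact: (dig_lt p HRdense ga' lt).
have := hmax a'; rewrite mcoeff_msupp ga' => /(_ isT).
rewrite /wt_nu /wt_t nb' nb0 !pmulrn.
move: lb; rewrite -(ler_nat rR) => lb.
rewrite -!pmulrn; lra.
Qed.
End LemB.

Section Final.
Variable K : fieldType.
Variable nu : K -> int.
Variable p : K.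
Variable k : fieldType.
Variable res : K -> k.
Variable Rs : K -> Prop.
Hypothesis Hnu : is_dvaluation nu p.
Hypothesis Hres : is_residue_map nu res.
Hypothesis HRsub : is_subring Rs.
Hypothesis HROK : forall x, Rs x -> OK nu x.
Hypothesis HRdense : dense_in_OK nu Rs.
Variable n : nat.

Lemma red_sum_in (T : eqType) (s : seq T) (Fh : T -> {mpoly K[n.+1]}) :
  (forall i, i \in s -> RtX_poly Rs (Fh i)) ->
  red_t1 res (\sum_(i <- s) Fh i) = \sum_(i <- s) red_t1 res (Fh i).
Proof.
elim: s => [|i s IH] H; first by rewrite !big_nil red0.
have Hs : forall j, j \in s -> RtX_poly Rs (Fh j).
  by move=> j js; apply: H; rewrite inE js orbT.
rewrite !big_cons (redD Hres HROK) ?IH //; first by apply: H; rewrite mem_head.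
rewrite big_seq; apply: (RsP_sum HRsub) => j js; exact: Hs.
Qed.

Lemma gen_RsP (G : {mpoly K[n.+1]} -> Prop) h :
  (forall g, G g -> RtX_poly Rs g) -> gen_ideal (RtX_poly Rs) G h -> RtX_poly Rs h.
Proof.
move=> HG [s [Hs ->]]; rewrite big_seq; apply: (RsP_sum HRsub) => q qs.
by have [h1 h2] := Hs q qs; apply: (RsPM HRsub) => //; apply: HG.
Qed.

Definition liftP (q : {mpoly k[n]}) : {mpoly K[n.+1]} :=
  \sum_(a <- msupp q) lft Hres HROK HRdense q@_a *: 'X_[ext 0 a].

Lemma liftP_RsP q : RtX_poly Rs (liftP q).
Proof.
rewrite /liftP; apply: (RsP_sum HRsub) => a _; apply: (RsPZX HRsub).
exact: (proj1 (lftP Hres HROK HRdense _)).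
Qed.

Lemma red_liftP q : red_t1 res (liftP q) = q.
Proof.
rewrite /liftP red_sum_in; last first.
  move=> a _; apply: (RsPZX HRsub); exact: (proj1 (lftP Hres HROK HRdense _)).
rewrite [RHS]mpolyE; apply: eq_bigr => a _.
by rewrite (redZX Hres) mtail_ext (proj2 (lftP Hres HROK HRdense _)).
Qed.
End Final.

Theorem corollary2p9
  (K : fieldType) (nu : K -> int) (p : K) (k : fieldType) (res : K -> k)
  (Rs : K -> Prop) (n : nat) (rR : realType)
  (Hnu : is_dvaluation nu p) (Hcomplete : vcomplete nu)
  (Hres : is_residue_map nu res)
  (HRsub : is_subring Rs) (HROK : forall x, Rs x -> OK nu x)
  (HRdense : dense_in_OK nu Rs) (HRnoeth : is_noetherian_sub Rs) (HRp : Rs p)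
  (I : {mpoly K[n]} -> Prop) (HI : is_ideal I) (w : 'I_n -> rR) :
  forall x : {mpoly k[n]},
    (exists h : {mpoly K[n.+1]},
        gen_ideal (RtX_poly Rs)
          (fun g => exists f, [/\ RtX_series Rs f,
                                 (exists2 gI, pi_rel nu p f gI & I gI) &
                                 is_initial_form w f g])
          h
        /\ x = red_t1 res h)
    <->
    gen_ideal (fun _ => True) (fun g => exists2 f, I f & g = in_nu w nu p res f) x.
Proof.
have HI0 : I 0 by case: HI.
have in0 : in_nu w nu p res (0 : {mpoly K[n]}) = 0 by rewrite /in_nu msupp0 big_nil.
move=> x; split.
  move=> [h [[s [Hs ->]] ->]].
  have GR : forall q, q \in s -> RtX_poly Rs q.1 /\ RtX_poly Rs q.2.
    move=> q qs; have [h1 [F [HF _ Hin]]] := Hs q qs.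
    by split => //; apply: (init_RsP HRsub HF Hin).
  have Gin : forall q, q \in s -> exists2 f, I f & red_t1 res q.2 = in_nu w nu p res f.
    move=> q qs; have [_ [F [HF [gI Hpi IgI] Hin]]] := Hs q qs.
    case: (classic (exists a0 b0, maxterm w F a0 b0 /\ res (F a0 b0) != 0)).
      move=> [a0 [b0 [m0 r0]]]; exists gI => //.
      exact: (initial_red Hnu Hres HROK HF Hpi Hin m0 r0).
    by move=> H; exists 0 => //; rewrite in0 (initial_red0 Hres Hin H).
  exists [seq (red_t1 res q.1, red_t1 res q.2) | q <- s]; split.
    by move=> q' /mapP [q qs ->]; split => //=; apply: Gin.
  rewrite big_map (red_sum_in Hres HRsub HROK); last first.
    by move=> q qs; have [h1 h2] := GR q qs; apply: (RsPM HRsub).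
  apply: eq_big_seq => q qs; have [h1 h2] := GR q qs.
  by rewrite (redM Hres HRsub HROK).
move=> [s [Hs ->]]; elim: s Hs => [|q s IH] Hs.
  exists 0; split; last by rewrite big_nil red0.
  by exists [::]; split => //; rewrite big_nil.
have [h0 [Hh0 e0]] : exists h0, gen_ideal (RtX_poly Rs)
          (fun g => exists f, [/\ RtX_series Rs f,
                                 (exists2 gI, pi_rel nu p f gI & I gI) &
                                 is_initial_form w f g]) h0 /\
          \sum_(q <- s) q.1 * q.2 = red_t1 res h0.
  by apply: IH => q' qs'; apply: Hs; rewrite inE qs' orbT.
have [_ [f If eq2]] := Hs q (mem_head _ _).
have [h' [Gh' [Rh' rh']]] := lemB Hnu Hres HRsub HROK HRdense w HI If.
set L := liftP Hres HROK HRdense q.1.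
have RL : RtX_poly Rs L by apply: liftP_RsP.
have R0 : RtX_poly Rs h0.
  apply: (gen_RsP HRsub _ Hh0) => g [F [HF _ Hin]]; exact: (init_RsP HRsub HF Hin).
exists (L * h' + h0); split.
  case: Hh0 => [s0 [Hs0 ->]]; exists ((L, h') :: s0); split.
    by move=> q'; rewrite inE => /orP[/eqP ->|/Hs0] //.
  by rewrite big_cons.
rewrite (redD Hres HROK) //; last exact: (RsPM HRsub).
rewrite (redM Hres HRsub HROK) //.
rewrite big_cons eq2 /L red_liftP // -e0; congr (_ * _ + _); exact: esym rh'.
Qed.
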